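(* Let $\mathcal{G}=(V,\mathcal{E})$ be a strongly connected digraph with $n\ge3$ nodes, $P$ an irreducible Markov chain transition matrix conforming to $\mathcal{G}$, and $\tau\in\mathbb{Z}_{>0}$. Let $i\in V$ be a leaf node with unique neighbor $j\ne i$. Then for every $k\in V\setminus\{i,j\}$, $\mathbb{P}(T_{ki}\le\tau)\le\mathbb{P}(T_{ii}\le\tau)$; that is, attacking node $i$ just as the surveillance agent leaves node $i$ is not better for the intruder than attacking node $i$ while the agent is at $k$.
   Context: $P=(p_{ij})$ conforms to $\mathcal{G}$ if it is row-stochastic, nonnegative, and $p_{ij}=0$ whenever $(i,j)\notin\mathcal{E}$. A leaf node $i$ with neighbor $j$ is a node such that the only edges between $i$ and other nodes are $(i,j)$ and $(j,i)$ (a self-loop at $i$ may be present). For the Markov chain $(X_k)$ with transition matrix $P$, $T_{ij}=\min\{k\ge1:X_k=j\}$ given $X_0=i$; in particular $T_{ii}$ is the first return time to $i$. *)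

(* Defs.v *)
From HB Require Import structures.
From mathcomp Require Import all_boot all_order all_algebra.
Set Implicit Arguments. Unset Strict Implicit. Unset Printing Implicit Defensive.
Import Order.TTheory GRing.Theory Num.Theory.
Local Open Scope ring_scope.

Section Defs.
Variables (R : realFieldType) (n : nat).

Definition strongly_connected (E : rel 'I_n) : Prop :=
  forall x y : 'I_n, connect E x y.

Definition conforms (E : rel 'I_n) (P : 'M[R]_n) : Prop :=
  [/\ forall x y, 0 <= P x y,
      forall x, \sum_(y < n) P x y = 1
    & forall x y, ~~ E x y -> P x y = 0].

Definition irreducible (P : 'M[R]_n) : Prop :=
  forall x y : 'I_n, exists m : nat, 0 < (P ^+ m) x y.

(* i is a leaf node with neighbor j: the only edges between i and other nodes
   are (i,j) and (j,i) (both present); a self-loop at i is allowed. *)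
Definition leaf (E : rel 'I_n) (i j : 'I_n) : Prop :=
  [/\ j != i, E i j, E j i &
      forall x, x != i -> (E i x = (x == j)) /\ (E x i = (x == j))].

(* first_hit P i m k = P(T_{ki} = m) for the chain started at X_0 = k,
   where T_{ki} = min{m >= 1 : X_m = i}:
     P(T = 1) = P k i,
     P(T = m+2) = sum_{h <> i} P k h * P(T_{hi} = m+1). *)
Fixpoint first_hit (P : 'M[R]_n) (i : 'I_n) (m : nat) (k : 'I_n) : R :=
  match m with
  | 0 => 0
  | 1 => P k i
  | m'.+1 => \sum_(h < n | h != i) P k h * first_hit P i m' h
  end.

Definition hit_le (P : 'M[R]_n) (k i : 'I_n) (tau : nat) : R :=
  \sum_(1 <= m < tau.+1) first_hit P i m k.

End Defs.

(* Main.v *)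
Require Import Defs.
From mathcomp Require Import all_boot all_order all_algebra.
Import Order.TTheory GRing.Theory Num.Theory.
Local Open Scope ring_scope.

Section Aux.
Variables (R : realFieldType) (n : nat) (E : rel 'I_n) (P : 'M[R]_n) (i j : 'I_n).
Hypothesis HC : conforms E P.
Hypothesis HL : leaf E i j.

Let P0 : forall x y, 0 <= P x y. Proof. by case: HC. Qed.
Let Prow : forall x, \sum_(y < n) P x y = 1. Proof. by case: HC. Qed.
Let PE : forall x y, ~~ E x y -> P x y = 0. Proof. by case: HC. Qed.
Let ji : j != i. Proof. by case: HL. Qed.

Lemma Pxi0 x : x != i -> x != j -> P x i = 0.
Proof.
move=> xi xj; apply: PE; case: HL => _ _ _ H; have [_ ->] := H x xi; exact: xj.
Qed.

Lemma Pix0 x : x != i -> x != j -> P i x = 0.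
Proof.
move=> xi xj; apply: PE; case: HL => _ _ _ H; have [-> _] := H x xi; exact: xj.
Qed.

Lemma fh_ge0 m x : 0 <= first_hit P i m x.
Proof.
elim: m x => [|m IH] x //=; case: m IH => [|m] IH /=; first exact: P0.
by apply: sumr_ge0 => h _; apply: mulr_ge0; [exact: P0 | exact: IH].
Qed.

Lemma a_rec m x : hit_le P x i m.+1 =
  P x i + \sum_(h < n | h != i) P x h * hit_le P h i m.
Proof.
elim: m x => [|m IH] x.
  rewrite /hit_le big_nat1 /= big1 ?addr0 // => h _; by rewrite big_geq // mulr0.
have S m' y : hit_le P y i m'.+1 = hit_le P y i m' + first_hit P i m'.+1 y.
  by rewrite /hit_le big_nat_recr.
rewrite S IH -addrA; congr (_ + _).
have -> : first_hit P i m.+2 x =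
   \sum_(h < n | h != i) P x h * first_hit P i m.+1 h by [].
rewrite -big_split /=; apply: eq_bigr => h _; by rewrite (S m) mulrDr.
Qed.

Lemma a_mono m x : hit_le P x i m <= hit_le P x i m.+1.
Proof. by rewrite /hit_le [leRHS]big_nat_recr // lerDl; exact: fh_ge0. Qed.

Lemma a_ge0 m x : 0 <= hit_le P x i m.
Proof. by apply: sumr_ge0 => t _; apply: fh_ge0. Qed.

Lemma rowsplit x : P x i + \sum_(h < n | h != i) P x h = 1.
Proof. by rewrite -(Prow x) [RHS](bigD1 i). Qed.

Lemma a_le1 m x : hit_le P x i m <= 1.
Proof.
elim: m x => [|m IH] x; first by rewrite /hit_le big_geq.
rewrite a_rec -(rowsplit x) lerD2l; apply: ler_sum => h _.
by rewrite -[leRHS]mulr1 ler_wpM2l // IH.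
Qed.

Lemma a_other_gen m h : h != i -> h != j ->
  (forall h', h' != i -> hit_le P h' i m <= hit_le P j i m) ->
  hit_le P h i m.+1 <= hit_le P j i m.
Proof.
move=> hi hj B; rewrite a_rec Pxi0 // add0r.
apply: (@le_trans _ _ (\sum_(h' < n | h' != i) P h h' * hit_le P j i m)).
  apply: ler_sum => h' h'i.
  by rewrite ler_wpM2l // B.
rewrite -mulr_suml; have := rowsplit h; rewrite Pxi0 // add0r => ->.
by rewrite mul1r.
Qed.

Lemma a_B m h : h != i -> hit_le P h i m <= hit_le P j i m.
Proof.
elim: m h => [|m IH] h hi; first by rewrite /hit_le !big_geq.
have [->|hj] := eqVneq h j; first by [].
apply: le_trans (a_mono _ _); exact: a_other_gen.
Qed.

Lemma main_aux t k : k != i -> k != j -> hit_le P k i t.+1 <= hit_le P i i t.+1.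
Proof.
move=> ki kj; have H1 := a_other_gen t k ki kj (fun h hi => a_B t h hi). apply: (le_trans H1).
rewrite a_rec.
have -> : \sum_(h < n | h != i) P i h * hit_le P h i t = P i j * hit_le P j i t.
  rewrite (bigD1 j) //= big1 ?addr0 // => h /andP[hi hj]; by rewrite Pix0 ?mul0r.
have Hs : P i i + P i j = 1.
  rewrite -(rowsplit i) (bigD1 j) //= big1 ?addr0 // => h /andP[hi hj]; by rewrite Pix0.
rewrite -{1}(mul1r (hit_le P j i t)) -Hs mulrDl lerD2r.
by rewrite -[leRHS]mulr1 ler_wpM2l // a_le1.
Qed.

End Aux.
Import Order.TTheory GRing.Theory Num.Theory.
Local Open Scope ring_scope.

Theorem lemma4 (R : realFieldType) (n : nat) (E : rel 'I_n) (P : 'M[R]_n)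
  (tau : nat) (i j : 'I_n) :
  (3 <= n)%N ->
  strongly_connected E ->
  conforms E P ->
  irreducible P ->
  (0 < tau)%N ->
  leaf E i j ->
  forall k : 'I_n, k != i -> k != j ->
    hit_le P k i tau <= hit_le P i i tau.
Proof.
move=> _ _ HC _ Ht HL k ki kj.
case: tau Ht => [|t] // _. exact: (@main_aux _ _ _ _ _ _ HC HL t k ki kj).
Qed.
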